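(* With $U_0,\Omega'_0,U'_0,y,\Upsilon_y,Z_y,S_2$ as in the context, let $Z'_y$ be the unique function on $\mathbb{K}^E$ with $dZ'_y=\cos\Upsilon_y\,dU'_0+\sin\Upsilon_y\star dU'_0$ and $Z'_y\to0$ at infinity. Then the one-form $$\mathbf{T}_2=-\frac{4}{\rho}S_2\star d(Z'_y+U'_0)$$ satisfies on $\mathbb{K}^E$ $$d(\rho\star\mathbf{T}_2)=8\sin\Upsilon_y\,e^{-2U_0-2Z_y}\,d\Omega'_0\wedge\star dU'_0,$$ equivalently $\nabla_aT_2^a=\frac{8}{\sqrt{\rho^2+(z-y)^2}}e^{-2U_0-2Z_y}(d\Omega'_0,dU'_0)_\gamma$ off the axis.
   Context: Let $\mathbb{E}^3$ have cylindrical coordinates $(\rho,z,\phi)$ and flat metric $\gamma=d\rho^2+dz^2+\rho^2d\phi^2$, with covariant derivative $\nabla$. Let $\Sigma_0$ be a $C^1$ axially symmetric surface diffeomorphic to a 2-sphere, given by $\{\rho=\rho_0(\mu),z=z_0(\mu),\phi=\varphi\}$, $\mu\in[\mu_S,\mu_N]$, with $\mu_S<\mu_N$ the only zeros of $\rho_0$ and $z_S:=z_0(\mu_S)<z_N:=z_0(\mu_N)$; $D_0$ is its unbounded exterior region. A function $f$ on $D_0$ is regular if it is $C^2$ on $D_0$, has a $C^1$ extension to $D_0\cup\Sigma_0$, and $rf$ is bounded ($r=\sqrt{\rho^2+z^2}$). $\mathbb{K}=\{(\rho,z):\rho\ge0\}$ carries the metric $d\rho^2+dz^2$ and Hodge star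 with $\star d\rho=-dz$, $\star dz=d\rho$; axially symmetric functions and one-forms $T^\rho d\rho+T^zdz$ are identified with objects on $\mathbb{K}$; $\mathbb{K}^E$ is the projection of $D_0$. $U_0$ and $U'_0$ are axially symmetric regular flat-harmonic functions on $D_0$, and $\Omega'_0$ an axially symmetric regular solution of $\triangle_\gamma\Omega'_0-4(d\Omega'_0,dU_0)_\gamma=0$. For $y\in(z_S,z_N)$: $\cos\Upsilon_y=(z-y)/\sqrt{\rho^2+(z-y)^2}$, $\sin\Upsilon_y=\rho/\sqrt{\rho^2+(z-y)^2}$; $Z_y$ is the solution of $dZ_y=\cos\Upsilon_y\,dU_0+\sin\Upsilon_y\star dU_0$ vanishing at infinity; $S_2$ is the solution vanishing at infinity of $dS_2=e^{-2U_0-2Z_y}[(1-\cos\Upsilon_y)d\Omega'_0-\sin\Upsilon_y\star d\Omega'_0]$. *)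

(* Defs.v *)
From Stdlib Require Import Reals Lra.
From Coquelicot Require Import Coquelicot.
Open Scope R_scope.

Definition dist3 (x y z x' y' z' : R) : R :=
  sqrt ((x - x') ^ 2 + (y - y') ^ 2 + (z - z') ^ 2).

Definition cont_within (S : R -> R -> R -> Prop) (F : R -> R -> R -> R)
  (x y z : R) : Prop :=
  forall eps, 0 < eps -> exists del, 0 < del /\
    forall x' y' z', S x' y' z' -> dist3 x' y' z' x y z < del ->
      Rabs (F x' y' z' - F x y z) < eps.

Definition pd3 (i : nat) (F : R -> R -> R -> R) : R -> R -> R -> R :=
  fun x y z => match i with
  | O => Derive (fun t => F t y z) x
  | S O => Derive (fun t => F x t z) y
  | _ => Derive (fun t => F x y t) z
  end.

Definition ex_pd3 (i : nat) (F : R -> R -> R -> R) (x y z : R) : Prop :=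
  match i with
  | O => ex_derive (fun t => F t y z) x
  | S O => ex_derive (fun t => F x t z) y
  | _ => ex_derive (fun t => F x y t) z
  end.

Definition C2_on (D : R -> R -> R -> Prop) (F : R -> R -> R -> R) : Prop :=
  forall x y z, D x y z ->
    cont_within D F x y z /\
    forall i j, (i < 3)%nat -> (j < 3)%nat ->
      ex_pd3 i F x y z /\ cont_within D (pd3 i F) x y z /\
      ex_pd3 j (pd3 i F) x y z /\ cont_within D (pd3 j (pd3 i F)) x y z.

(* F (with its first partials) has a C^1 extension to D ∪ Σ *)
Definition C1_ext (D Sg : R -> R -> R -> Prop) (F : R -> R -> R -> R) : Prop :=
  exists G : nat -> R -> R -> R -> R,
    (forall x y z, D x y z ->
       G 3%nat x y z = F x y z /\
       forall i, (i < 3)%nat -> G i x y z = pd3 i F x y z) /\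
    (forall x y z, (D x y z \/ Sg x y z) ->
       forall i, (i <= 3)%nat ->
         cont_within (fun a b c => D a b c \/ Sg a b c) (G i) x y z).

Definition r3 (x y z : R) : R := sqrt (x ^ 2 + y ^ 2 + z ^ 2).

Definition regular3 (D Sg : R -> R -> R -> Prop) (F : R -> R -> R -> R) : Prop :=
  C2_on D F /\ C1_ext D Sg F /\
  exists M, forall x y z, D x y z -> r3 x y z * Rabs (F x y z) <= M.

Definition lap3 (F : R -> R -> R -> R) : R -> R -> R -> R :=
  fun x y z => pd3 0 (pd3 0 F) x y z + pd3 1 (pd3 1 F) x y z + pd3 2 (pd3 2 F) x y z.

Definition gdot3 (F G : R -> R -> R -> R) : R -> R -> R -> R :=
  fun x y z => pd3 0 F x y z * pd3 0 G x y z + pd3 1 F x y z * pd3 1 G x y z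
             + pd3 2 F x y z * pd3 2 G x y z.

(* axially symmetric function on E^3 determined by its values on K *)
Definition lift (f : R -> R -> R) : R -> R -> R -> R :=
  fun x y z => f (sqrt (x ^ 2 + y ^ 2)) z.

Definition Sigma0 (rho0 z0 : R -> R) (muS muN : R) (x y z : R) : Prop :=
  exists mu phi, muS <= mu <= muN /\
    x = rho0 mu * cos phi /\ y = rho0 mu * sin phi /\ z = z0 mu.

(* C^1 profile curve of an embedded axially symmetric sphere *)
Definition sphere_profile (rho0 z0 : R -> R) (muS muN : R) : Prop :=
  muS < muN /\ rho0 muS = 0 /\ rho0 muN = 0 /\
  (forall mu, muS < mu < muN -> 0 < rho0 mu) /\
  z0 muS < z0 muN /\
  (forall mu, muS <= mu <= muN ->
     ex_derive rho0 mu /\ ex_derive z0 mu /\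
     continuity_pt (Derive rho0) mu /\ continuity_pt (Derive z0) mu /\
     (Derive rho0 mu <> 0 \/ Derive z0 mu <> 0)) /\
  (forall mu mu', muS <= mu <= muN -> muS <= mu' <= muN ->
     rho0 mu = rho0 mu' -> z0 mu = z0 mu' -> mu = mu').

(* unbounded connected component of the complement of Sg: the points that
   can be joined, avoiding Sg, to points arbitrarily far away *)
Definition exterior (Sg : R -> R -> R -> Prop) (x y z : R) : Prop :=
  ~ Sg x y z /\
  forall M, exists gx gy gz : R -> R,
    (forall t, 0 <= t <= 1 ->
       continuity_pt gx t /\ continuity_pt gy t /\ continuity_pt gz t /\
       ~ Sg (gx t) (gy t) (gz t)) /\
    gx 0 = x /\ gy 0 = y /\ gz 0 = z /\
    M < r3 (gx 1) (gy 1) (gz 1).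

(* K^E : projection of D onto K = {(rho,z) | rho >= 0} *)
Definition projK (D : R -> R -> R -> Prop) (rho z : R) : Prop :=
  exists x y, D x y z /\ rho = sqrt (x ^ 2 + y ^ 2).

(* one-form a drho + b dz *)
Definition form1 := ((R -> R -> R) * (R -> R -> R))%type.

Definition dK0 (f : R -> R -> R) : form1 :=
  (fun r z => Derive (fun t => f t z) r, fun r z => Derive (fun t => f r t) z).

(* Hodge star: *drho = -dz, *dz = drho *)
Definition star (w : form1) : form1 := (snd w, fun r z => - fst w r z).

Definition fscale (g : R -> R -> R) (w : form1) : form1 :=
  (fun r z => g r z * fst w r z, fun r z => g r z * snd w r z).

Definition fadd (w v : form1) : form1 :=
  (fun r z => fst w r z + fst v r z, fun r z => snd w r z + snd v r z).

(* two-forms are identified with their coefficient on drho /\ dz *)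
Definition dK1 (w : form1) : R -> R -> R :=
  fun r z => Derive (fun t => snd w t z) r - Derive (fun t => fst w r t) z.

Definition wedge (w v : form1) : R -> R -> R :=
  fun r z => fst w r z * snd v r z - snd w r z * fst v r z.

Definition cosU (y : R) : R -> R -> R :=
  fun r z => (z - y) / sqrt (r ^ 2 + (z - y) ^ 2).
Definition sinU (y : R) : R -> R -> R :=
  fun r z => r / sqrt (r ^ 2 + (z - y) ^ 2).

Definition solves_d (KE : R -> R -> Prop) (f : R -> R -> R) (w : form1) : Prop :=
  forall r z, KE r z -> 0 < r ->
    ex_derive (fun t => f t z) r /\ ex_derive (fun t => f r t) z /\
    Derive (fun t => f t z) r = fst w r z /\ Derive (fun t => f r t) z = snd w r z.

Definition vanishes_at_infinity (KE : R -> R -> Prop) (f : R -> R -> R) : Prop :=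
  forall eps, 0 < eps -> exists M, forall r z, KE r z ->
    M < sqrt (r ^ 2 + z ^ 2) -> Rabs (f r z) < eps.

(* Main.v *)
Require Import Defs.
From Stdlib Require Import Reals Lra Psatz.
From Coquelicot Require Import Coquelicot.
Open Scope R_scope.

Lemma rho0_nonneg rho0 z0 muS muN mu :
  sphere_profile rho0 z0 muS muN -> muS <= mu <= muN -> 0 <= rho0 mu.
Proof.
  intros [H1 [H2 [H3 [H4 _]]]] Hm.
  destruct (Req_dec mu muS) as [->|N1]; [lra|].
  destruct (Req_dec mu muN) as [->|N2]; [lra|].
  left; apply H4; lra.
Qed.

Lemma Sg_char rho0 z0 muS muN x y z :
  sphere_profile rho0 z0 muS muN -> Sigma0 rho0 z0 muS muN x y z ->
  exists mu, muS <= mu <= muN /\ rho0 mu = sqrt (x^2+y^2) /\ z0 mu = z.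
Proof.
  intros Hs [mu [phi [Hm [-> [-> ->]]]]]. exists mu. split; [auto|split; [|auto]].
  replace ((rho0 mu * cos phi) ^ 2 + (rho0 mu * sin phi) ^ 2) with (rho0 mu ^ 2).
  - rewrite sqrt_pow2; auto. eapply rho0_nonneg; eauto.
  - pose proof (sin2_cos2 phi). unfold Rsqr in H. nra.
Qed.

Lemma polar x y rh : 0 < rh -> rh = sqrt (x^2+y^2) ->
  exists th, x = rh * cos th /\ y = rh * sin th.
Proof.
  intros Hr Hrh.
  assert (H2 : rh ^ 2 = x^2 + y^2) by (rewrite Hrh, pow2_sqrt; nra).
  set (u := x / rh).
  assert (Hu : -1 <= u <= 1).
  { unfold u. split.
    - apply Rmult_le_reg_r with rh; auto. field_simplify; [|lra]. nra.
    - apply Rmult_le_reg_r with rh; auto. field_simplify; [|lra]. nra. }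
  assert (Hs : sqrt (1 - u²) = Rabs y / rh).
  { replace (1 - u²) with ((Rabs y / rh) ^ 2).
    - rewrite sqrt_pow2; auto. apply Rdiv_le_0_compat; [apply Rabs_pos|lra].
    - unfold u, Rsqr. assert (Ha : Rabs y ^ 2 = rh^2 - x^2) by (rewrite pow2_abs; lra).
      unfold Rdiv. rewrite Rpow_mult_distr, Ha. field. lra. }
  destruct (Rle_or_lt 0 y) as [Hy|Hy].
  - exists (acos u). rewrite cos_acos by auto. rewrite sin_acos by auto. rewrite Hs. unfold u.
    rewrite Rabs_pos_eq by auto. split; field; lra.
  - exists (- acos u). rewrite cos_neg, sin_neg. rewrite cos_acos by auto. rewrite sin_acos by auto. rewrite Hs. unfold u.
    rewrite Rabs_left by auto. split; field; lra.
Qed.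

Lemma Sg_char_conv rho0 z0 muS muN x y z mu :
  sphere_profile rho0 z0 muS muN -> muS <= mu <= muN ->
  rho0 mu = sqrt (x^2+y^2) -> z0 mu = z -> Sigma0 rho0 z0 muS muN x y z.
Proof.
  intros Hs Hm Hr Hz.
  destruct (rho0_nonneg _ _ _ _ mu Hs Hm) as [Hp|H0].
  - destruct (polar x y (rho0 mu) Hp Hr) as [th [Hx Hy]].
    exists mu, th. auto.
  - assert (x^2 + y^2 = 0).
    { rewrite <- H0 in Hr. symmetry in Hr. apply sqrt_eq_0 in Hr; nra. }
    exists mu, 0. rewrite <- H0. repeat split; auto; nra.
Qed.

Lemma sqrt_diff a b c d :
  Rabs (sqrt (a^2+b^2) - sqrt (c^2+d^2)) <= sqrt ((a-c)^2+(b-d)^2).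
Proof.
  set (AA := sqrt (a^2+b^2)). set (CC := sqrt (c^2+d^2)). set (EE := sqrt ((a-c)^2+(b-d)^2)).
  assert (HA : AA^2 = a^2+b^2) by (unfold AA; rewrite pow2_sqrt; [reflexivity|nra]).
  assert (HC : CC^2 = c^2+d^2) by (unfold CC; rewrite pow2_sqrt; [reflexivity|nra]).
  assert (HE : EE^2 = (a-c)^2+(b-d)^2) by (unfold EE; rewrite pow2_sqrt; [reflexivity|pose proof (pow2_ge_0 (a-c)); pose proof (pow2_ge_0 (b-d)); lra]).
  assert (A0 : 0 <= AA) by apply sqrt_pos.
  assert (C0 : 0 <= CC) by apply sqrt_pos.
  assert (E0 : 0 <= EE) by apply sqrt_pos.
  assert (CS : a*c + b*d <= AA*CC).
  { assert ((a*c+b*d)^2 <= (AA*CC)^2) by (rewrite Rpow_mult_distr, HA, HC; pose proof (pow2_ge_0 (a*d-b*c)); nra).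
    assert (0 <= AA*CC) by nra. nra. }
  assert ((AA - CC)^2 <= EE^2) by nra.
  apply Rabs_le. split; nra.
Qed.

Lemma dist3_ge_xy qx qy qz px py pz :
  Rabs (sqrt (qx^2+qy^2) - sqrt (px^2+py^2)) <= dist3 qx qy qz px py pz.
Proof.
  eapply Rle_trans; [apply sqrt_diff|]. unfold dist3. apply sqrt_le_1_alt. pose proof (pow2_ge_0 (qz-pz)); lra.
Qed.

Lemma dist3_ge_z qx qy qz px py pz : Rabs (qz - pz) <= dist3 qx qy qz px py pz.
Proof.
  rewrite <- (sqrt_pow2 (Rabs (qz-pz))) by apply Rabs_pos. rewrite pow2_abs.
  unfold dist3. apply sqrt_le_1_alt. pose proof (pow2_ge_0 (qx-px)); pose proof (pow2_ge_0 (qy-py)); lra.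
Qed.

Lemma dist3_le x y z x' y' z' :
  dist3 x y z x' y' z' <= Rabs (x-x') + Rabs (y-y') + Rabs (z-z').
Proof.
  unfold dist3. rewrite <- (sqrt_pow2 (Rabs (x-x') + Rabs (y-y') + Rabs (z-z'))).
  2: pose proof (Rabs_pos (x-x')); pose proof (Rabs_pos (y-y')); pose proof (Rabs_pos (z-z')); lra.
  apply sqrt_le_1_alt. rewrite <- (pow2_abs (x-x')), <- (pow2_abs (y-y')), <- (pow2_abs (z-z')).
  pose proof (Rabs_pos (x-x')); pose proof (Rabs_pos (y-y')); pose proof (Rabs_pos (z-z')). nra.
Qed.

Lemma cont_of_ex_derive f x : ex_derive f x -> continuity_pt f x.
Proof. intros H. apply continuity_pt_filterlim. apply (ex_derive_continuous f x H). Qed.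

Lemma Sg_closed rho0 z0 muS muN px py pz :
  sphere_profile rho0 z0 muS muN -> ~ Sigma0 rho0 z0 muS muN px py pz ->
  exists del, 0 < del /\ forall qx qy qz, dist3 qx qy qz px py pz < del ->
    ~ Sigma0 rho0 z0 muS muN qx qy qz.
Proof.
  intros Hs Hp.
  set (f := fun mu => Rabs (rho0 mu - sqrt (px^2+py^2)) + Rabs (z0 mu - pz)).
  assert (Hc : forall c, muS <= c <= muN -> continuity_pt f c).
  { intros c Hc. destruct Hs as [_ [_ [_ [_ [_ [Hd _]]]]]].
    destruct (Hd c Hc) as [Hr [Hz _]].
    apply continuity_pt_filterlim. unfold f.
    apply (continuous_plus (fun mu => Rabs (rho0 mu - sqrt (px^2+py^2))) (fun mu => Rabs (z0 mu - pz))).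
    - apply continuous_Rabs_comp.
      apply (continuous_plus rho0 (fun _ => - sqrt (px^2+py^2))).
      + apply ex_derive_continuous; auto.
      + apply continuous_const.
    - apply continuous_Rabs_comp.
      apply (continuous_plus z0 (fun _ => - pz)).
      + apply ex_derive_continuous; auto.
      + apply continuous_const. }
  assert (Hle : muS <= muN) by (destruct Hs; lra).
  destruct (continuity_ab_min f muS muN Hle Hc) as [mx [Hmin Hmx]].
  assert (Hpos : 0 < f mx).
  { unfold f. destruct (Rle_lt_or_eq_dec 0 (Rabs (rho0 mx - sqrt (px ^ 2 + py ^ 2)) + Rabs (z0 mx - pz))) as [H|H].
    - pose proof (Rabs_pos (rho0 mx - sqrt (px ^ 2 + py ^ 2))); pose proof (Rabs_pos (z0 mx - pz)); lra.
    - auto.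
    - exfalso. apply Hp.
      pose proof (Rabs_pos (rho0 mx - sqrt (px ^ 2 + py ^ 2))); pose proof (Rabs_pos (z0 mx - pz)).
      assert (E1 : Rabs (rho0 mx - sqrt (px ^ 2 + py ^ 2)) = 0) by lra.
      assert (E2 : Rabs (z0 mx - pz) = 0) by lra.
      apply Rabs_eq_0 in E1. apply Rabs_eq_0 in E2.
      apply (Sg_char_conv _ _ _ _ _ _ _ mx Hs Hmx); lra. }
  exists (f mx / 2). split; [lra|].
  intros qx qy qz Hd Hq.
  destruct (Sg_char _ _ _ _ _ _ _ Hs Hq) as [mu [Hm [Hr Hz]]].
  specialize (Hmin mu Hm). unfold f in Hmin at 2. rewrite Hr, Hz in Hmin.
  pose proof (dist3_ge_xy qx qy qz px py pz). pose proof (dist3_ge_z qx qy qz px py pz).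
  lra.
Qed.


Definition m1 t := (2*t+1 - Rabs (2*t-1))/2.
Definition m2 t := (2*t-1 + Rabs (2*t-1))/2.

Lemma m_cont_aux t : continuous (fun t => Rabs (2*t-1)) t.
Proof.
  apply continuous_Rabs_comp.
  apply (continuous_plus (fun t => 2*t) (fun _ => -1)); [|apply continuous_const].
  apply (continuous_mult (fun _ => 2) (fun t => t)); [apply continuous_const|apply continuous_id].
Qed.

Lemma m1_cont t : continuous m1 t.
Proof.
  unfold m1.
  apply (continuous_mult (fun t => 2*t+1 - Rabs (2*t-1)) (fun _ => /2)); [|apply continuous_const].
  apply (continuous_plus (fun t => 2*t+1) (fun t => - Rabs (2*t-1))).
  - apply (continuous_plus (fun t => 2*t) (fun _ => 1)); [|apply continuous_const].
    apply (continuous_mult (fun _ => 2) (fun t => t)); [apply continuous_const|apply continuous_id].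
  - apply (continuous_opp (fun t => Rabs (2*t-1))). apply m_cont_aux.
Qed.

Lemma m2_cont t : continuous m2 t.
Proof.
  unfold m2.
  apply (continuous_mult (fun t => 2*t-1 + Rabs (2*t-1)) (fun _ => /2)); [|apply continuous_const].
  apply (continuous_plus (fun t => 2*t-1) (fun t => Rabs (2*t-1))).
  - apply (continuous_plus (fun t => 2*t) (fun _ => -1)); [|apply continuous_const].
    apply (continuous_mult (fun _ => 2) (fun t => t)); [apply continuous_const|apply continuous_id].
  - apply m_cont_aux.
Qed.

Lemma path_cont (g : R -> R) q p t : 0 <= t <= 1 ->
  (forall s, 0 <= s <= 1 -> continuity_pt g s) ->
  continuity_pt (fun t => q + m1 t * (p - q) + (g (m2 t) - p)) t.
Proof.
  intros Ht Hg. apply continuity_pt_filterlim.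
  apply (continuous_plus (fun t => q + m1 t * (p - q)) (fun t => g (m2 t) - p)).
  - apply (continuous_plus (fun _ => q) (fun t => m1 t * (p - q))); [apply continuous_const|].
    apply (continuous_mult m1 (fun _ => p - q)); [apply m1_cont|apply continuous_const].
  - apply (continuous_plus (fun t => g (m2 t)) (fun _ => - p)); [|apply continuous_const].
    apply (continuous_comp m2 g); [apply m2_cont|].
    apply continuity_pt_filterlim. apply Hg.
    unfold m2. destruct (Rcase_abs (2*t-1)) as [H|H].
    + rewrite Rabs_left by auto. lra.
    + rewrite Rabs_pos_eq by lra. lra.
Qed.

Lemma m_low t : t <= 1/2 -> m1 t = 2*t /\ m2 t = 0.
Proof. intros H. unfold m1, m2. rewrite Rabs_left1 by lra. split; field. Qed.
Lemma m_high t : 1/2 <= t -> m1 t = 1 /\ m2 t = 2*t-1.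
Proof. intros H. unfold m1, m2. rewrite Rabs_pos_eq by lra. split; field. Qed.

Lemma D0_open rho0 z0 muS muN px py pz :
  sphere_profile rho0 z0 muS muN ->
  exterior (Sigma0 rho0 z0 muS muN) px py pz ->
  exists del, 0 < del /\ forall qx qy qz, dist3 qx qy qz px py pz < del ->
    exterior (Sigma0 rho0 z0 muS muN) qx qy qz.
Proof.
  intros Hs [Hp Hpath].
  destruct (Sg_closed _ _ _ _ _ _ _ Hs Hp) as [del [Hdel Hcl]].
  exists del. split; auto. intros qx qy qz Hq. split; [apply Hcl; auto|].
  intros M. destruct (Hpath M) as [gx [gy [gz [Hg [Hx0 [Hy0 [Hz0 HM]]]]]]].
  exists (fun t => qx + m1 t * (px - qx) + (gx (m2 t) - px)),
         (fun t => qy + m1 t * (py - qy) + (gy (m2 t) - py)),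
         (fun t => qz + m1 t * (pz - qz) + (gz (m2 t) - pz)).
  assert (E0 : m1 0 = 0 /\ m2 0 = 0) by (destruct (m_low 0); [lra|split; lra]).
  assert (E1 : m1 1 = 1 /\ m2 1 = 1) by (destruct (m_high 1); [lra|split; lra]).
  destruct E0 as [E0a E0b]; destruct E1 as [E1a E1b].
  split; [|repeat split].
  - intros t Ht. repeat split.
    + apply path_cont; auto. intros s Hs'; apply Hg; auto.
    + apply path_cont; auto. intros s Hs'; apply Hg; auto.
    + apply path_cont; auto. intros s Hs'; apply Hg; auto.
    + destruct (Rle_or_lt t (1/2)) as [Hl|Hl].
      * destruct (m_low t Hl) as [-> ->]. rewrite Hx0, Hy0, Hz0.
        apply Hcl. eapply Rle_lt_trans; [|apply Hq]. unfold dist3. apply sqrt_le_1_alt.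
        assert (Hk : 0 <= (1 - 2*t)^2 <= 1) by (split; nra).
        replace (qx + 2 * t * (px - qx) + (px - px) - px) with ((1-2*t)*(qx-px)) by ring.
        replace (qy + 2 * t * (py - qy) + (py - py) - py) with ((1-2*t)*(qy-py)) by ring.
        replace (qz + 2 * t * (pz - qz) + (pz - pz) - pz) with ((1-2*t)*(qz-pz)) by ring.
        rewrite !Rpow_mult_distr.
        pose proof (pow2_ge_0 (qx-px)); pose proof (pow2_ge_0 (qy-py)); pose proof (pow2_ge_0 (qz-pz)).
        nra.
      * destruct (m_high t ltac:(lra)) as [-> ->].
        replace (qx + 1 * (px - qx) + (gx (2*t-1) - px)) with (gx (2*t-1)) by ring.
        replace (qy + 1 * (py - qy) + (gy (2*t-1) - py)) with (gy (2*t-1)) by ring.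
        replace (qz + 1 * (pz - qz) + (gz (2*t-1) - pz)) with (gz (2*t-1)) by ring.
        apply Hg. lra.
  - cbv beta. rewrite E0a, E0b, Hx0. ring.
  - cbv beta. rewrite E0a, E0b, Hy0. ring.
  - cbv beta. rewrite E0a, E0b, Hz0. ring.
  - rewrite E1a, E1b.
    replace (qx + 1 * (px - qx) + (gx 1 - px)) with (gx 1) by ring.
    replace (qy + 1 * (py - qy) + (gy 1 - py)) with (gy 1) by ring.
    replace (qz + 1 * (pz - qz) + (gz 1 - pz)) with (gz 1) by ring. auto.
Qed.

Lemma Sg_rot rho0 z0 muS muN x y z a :
  Sigma0 rho0 z0 muS muN x y z ->
  Sigma0 rho0 z0 muS muN (x * cos a - y * sin a) (x * sin a + y * cos a) z.
Proof.
  intros [mu [phi [Hm [-> [-> ->]]]]]. exists mu, (phi + a).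
  rewrite cos_plus, sin_plus. split; [auto|split; [ring|split; ring]].
Qed.

Lemma nSg_rot rho0 z0 muS muN x y z a :
  ~ Sigma0 rho0 z0 muS muN x y z ->
  ~ Sigma0 rho0 z0 muS muN (x * cos a - y * sin a) (x * sin a + y * cos a) z.
Proof.
  intros H H'. apply H. apply (Sg_rot _ _ _ _ _ _ _ (-a)) in H'.
  rewrite cos_neg, sin_neg in H'.
  pose proof (sin2_cos2 a) as E. unfold Rsqr in E.
  replace ((x * cos a - y * sin a) * cos a - (x * sin a + y * cos a) * - sin a) with (x * (sin a * sin a + cos a * cos a)) in H' by ring.
  replace ((x * cos a - y * sin a) * - sin a + (x * sin a + y * cos a) * cos a) with (y * (sin a * sin a + cos a * cos a)) in H' by ring.
  rewrite E, !Rmult_1_r in H'.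
  auto.
Qed.

Lemma ext_rot rho0 z0 muS muN x y z a :
  exterior (Sigma0 rho0 z0 muS muN) x y z ->
  exterior (Sigma0 rho0 z0 muS muN) (x * cos a - y * sin a) (x * sin a + y * cos a) z.
Proof.
  intros [Hp Hpath]. split; [apply nSg_rot; auto|].
  intros M. destruct (Hpath M) as [gx [gy [gz [Hg [Hx0 [Hy0 [Hz0 HM]]]]]]].
  exists (fun t => gx t * cos a - gy t * sin a), (fun t => gx t * sin a + gy t * cos a), gz.
  pose proof (sin2_cos2 a) as E. unfold Rsqr in E.
  split; [|repeat split].
  - intros t Ht. destruct (Hg t Ht) as [C1 [C2 [C3 N]]]. repeat split; auto.
    + apply continuity_pt_filterlim. apply continuity_pt_filterlim in C1. apply continuity_pt_filterlim in C2.
      apply (continuous_plus (fun t => gx t * cos a) (fun t => - (gy t * sin a))).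
      * apply (continuous_mult gx (fun _ => cos a)); auto; apply continuous_const.
      * apply (continuous_opp (fun t => gy t * sin a)).
        apply (continuous_mult gy (fun _ => sin a)); auto; apply continuous_const.
    + apply continuity_pt_filterlim. apply continuity_pt_filterlim in C1. apply continuity_pt_filterlim in C2.
      apply (continuous_plus (fun t => gx t * sin a) (fun t => gy t * cos a)).
      * apply (continuous_mult gx (fun _ => sin a)); auto; apply continuous_const.
      * apply (continuous_mult gy (fun _ => cos a)); auto; apply continuous_const.
    + apply nSg_rot; auto.
  - rewrite Hx0, Hy0; auto.
  - rewrite Hx0, Hy0; auto.
  - auto.
  - unfold r3 in *. replace ((gx 1 * cos a - gy 1 * sin a) ^ 2 + (gx 1 * sin a + gy 1 * cos a) ^ 2 + gz 1 ^ 2)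
      with ((gx 1 ^ 2 + gy 1 ^ 2) * (sin a * sin a + cos a * cos a) + gz 1 ^ 2) by ring.
    rewrite E, Rmult_1_r. auto.
Qed.

Lemma KE_axis rho0 z0 muS muN r z :
  projK (exterior (Sigma0 rho0 z0 muS muN)) r z -> 0 < r ->
  exterior (Sigma0 rho0 z0 muS muN) r 0 z.
Proof.
  intros [x [y [Hd Hr]]] Hr0.
  destruct (polar x y r Hr0 Hr) as [th [Hx Hy]].
  apply (ext_rot _ _ _ _ _ _ _ (-th)) in Hd.
  rewrite cos_neg, sin_neg, Hx, Hy in Hd.
  pose proof (sin2_cos2 th) as E. unfold Rsqr in E.
  replace (r * cos th * cos th - r * sin th * - sin th) with (r * (sin th * sin th + cos th * cos th)) in Hd by ring.
  rewrite E, Rmult_1_r in Hd.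
  replace (r * cos th * - sin th + r * sin th * cos th) with 0 in Hd by ring. auto.
Qed.


Definition Kr (U : R -> R -> R) a b := Derive (fun t => U t b) a.
Definition Kz (U : R -> R -> R) a b := Derive (fun t => U a t) b.

Lemma sq0 t : 0 < t -> sqrt (t^2 + 0^2) = t.
Proof. intros H. replace (t^2+0^2) with (t^2) by ring. apply sqrt_pow2; lra. Qed.

Lemma lift_0 U t s : 0 < t -> lift U t 0 s = U t s.
Proof. intros H. unfold lift. rewrite sq0; auto. Qed.

Lemma loc_pos t : 0 < t -> locally t (fun a => 0 < a).
Proof.
  intros H. exists (mkposreal (t/2) ltac:(lra)). intros a Ha.
  change (Rabs (a - t) < t/2) in Ha. apply Rabs_def2 in Ha. lra.
Qed.

Lemma loc_lift U t s : 0 < t -> locally t (fun a => lift U a 0 s = U a s).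
Proof.
  intros H. destruct (loc_pos t H) as [e He]. exists e. intros a Ha. apply lift_0, He, Ha.
Qed.

Lemma pd0_lift U t s : 0 < t -> pd3 0 (lift U) t 0 s = Kr U t s.
Proof. intros H. apply Derive_ext_loc. apply loc_lift; auto. Qed.

Lemma ex_pd0_lift U t s : 0 < t -> ex_pd3 0 (lift U) t 0 s -> ex_derive (fun a => U a s) t.
Proof. intros H E. eapply ex_derive_ext_loc; [apply loc_lift; auto|exact E]. Qed.

Lemma pd2_lift U t s : 0 < t -> pd3 2 (lift U) t 0 s = Kz U t s.
Proof. intros H. change (Derive (fun c => lift U t 0 c) s = Kz U t s). unfold lift. rewrite sq0; auto. Qed.

Lemma ex_pd2_lift U t s : 0 < t -> ex_pd3 2 (lift U) t 0 s -> ex_derive (fun c => U t c) s.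
Proof. intros H E. change (ex_derive (fun c => lift U t 0 c) s) in E. unfold lift in E. rewrite sq0 in E; auto. Qed.

Lemma loc_fun (F G : R -> R) t : 0 < t -> (forall a, 0 < a -> F a = G a) -> locally t (fun a => F a = G a).
Proof. intros H E. destruct (loc_pos t H) as [e He]. exists e. intros a Ha. apply E, He, Ha. Qed.

Lemma pd00_lift U t s : 0 < t -> pd3 0 (pd3 0 (lift U)) t 0 s = Derive (fun a => Kr U a s) t.
Proof. intros H. apply Derive_ext_loc. apply (loc_fun (fun a => pd3 0 (lift U) a 0 s)); auto. intros; apply pd0_lift; auto. Qed.
Lemma ex_pd00_lift U t s : 0 < t -> ex_pd3 0 (pd3 0 (lift U)) t 0 s -> ex_derive (fun a => Kr U a s) t.
Proof. intros H E. eapply ex_derive_ext_loc; [|exact E]. apply (loc_fun (fun a => pd3 0 (lift U) a 0 s)); auto. intros; apply pd0_lift; auto. Qed.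

Lemma pd02_lift U t s : 0 < t -> pd3 0 (pd3 2 (lift U)) t 0 s = Derive (fun a => Kz U a s) t.
Proof. intros H. apply Derive_ext_loc. apply (loc_fun (fun a => pd3 2 (lift U) a 0 s)); auto. intros; apply pd2_lift; auto. Qed.
Lemma ex_pd02_lift U t s : 0 < t -> ex_pd3 0 (pd3 2 (lift U)) t 0 s -> ex_derive (fun a => Kz U a s) t.
Proof. intros H E. eapply ex_derive_ext_loc; [|exact E]. apply (loc_fun (fun a => pd3 2 (lift U) a 0 s)); auto. intros; apply pd2_lift; auto. Qed.

Lemma pd20_lift U t s : 0 < t -> pd3 2 (pd3 0 (lift U)) t 0 s = Derive (fun c => Kr U t c) s.
Proof. intros H. apply Derive_ext. intros c. apply pd0_lift; auto. Qed.
Lemma ex_pd20_lift U t s : 0 < t -> ex_pd3 2 (pd3 0 (lift U)) t 0 s -> ex_derive (fun c => Kr U t c) s.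
Proof. intros H E. eapply ex_derive_ext; [|exact E]. intros c. apply pd0_lift; auto. Qed.

Lemma pd22_lift U t s : 0 < t -> pd3 2 (pd3 2 (lift U)) t 0 s = Derive (fun c => Kz U t c) s.
Proof. intros H. apply Derive_ext. intros c. apply pd2_lift; auto. Qed.
Lemma ex_pd22_lift U t s : 0 < t -> ex_pd3 2 (pd3 2 (lift U)) t 0 s -> ex_derive (fun c => Kz U t c) s.
Proof. intros H E. eapply ex_derive_ext; [|exact E]. intros c. apply pd2_lift; auto. Qed.

Lemma C2_K (D : R -> R -> R -> Prop) U t s : C2_on D (lift U) -> D t 0 s -> 0 < t ->
  ex_derive (fun a => U a s) t /\ ex_derive (fun c => U t c) s /\
  ex_derive (fun a => Kr U a s) t /\ ex_derive (fun a => Kz U a s) t /\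
  ex_derive (fun c => Kr U t c) s /\ ex_derive (fun c => Kz U t c) s.
Proof.
  intros HC HD H. destruct (HC t 0 s HD) as [_ HC2].
  destruct (HC2 0%nat 0%nat ltac:(lia) ltac:(lia)) as [E0 [_ [E00 _]]].
  destruct (HC2 2%nat 0%nat ltac:(lia) ltac:(lia)) as [E2 [_ [E02 _]]].
  destruct (HC2 0%nat 2%nat ltac:(lia) ltac:(lia)) as [_ [_ [E20 _]]].
  destruct (HC2 2%nat 2%nat ltac:(lia) ltac:(lia)) as [_ [_ [E22 _]]].
  repeat split.
  - apply ex_pd0_lift; auto.
  - apply ex_pd2_lift; auto.
  - apply ex_pd00_lift; auto.
  - apply ex_pd02_lift; auto.
  - apply ex_pd20_lift; auto.
  - apply ex_pd22_lift; auto.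
Qed.


Lemma sqrt_bound r b : 0 < r -> r <= sqrt (r^2+b^2) <= r + Rabs b.
Proof.
  intros Hr. split.
  - rewrite <- (sqrt_pow2 r) at 1 by lra. apply sqrt_le_1_alt. pose proof (pow2_ge_0 b); lra.
  - rewrite <- (sqrt_pow2 (r + Rabs b)) by (pose proof (Rabs_pos b); lra).
    apply sqrt_le_1_alt. rewrite <- (pow2_abs b). pose proof (Rabs_pos b). nra.
Qed.

Lemma sqrt_pos_r r b : 0 < r -> 0 < sqrt (r^2+b^2).
Proof. intros Hr. pose proof (sqrt_bound r b Hr). lra. Qed.

Lemma lap_K U r z e : 0 < r -> 0 < e ->
  (forall a, Rabs (a - r) < e -> ex_derive (fun t => U t z) a) ->
  ex_derive (fun a => Kr U a z) r ->
  pd3 1 (pd3 1 (lift U)) r 0 z = Kr U r z / r.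
Proof.
  intros Hr He Hex Hex2.
  change (Derive (fun b => pd3 1 (lift U) r b z) 0 = Kr U r z / r).
  rewrite (Derive_ext_loc _ (fun b => Kr U (sqrt (r^2+b^2)) z * (b / sqrt (r^2+b^2)))).
  2:{ exists (mkposreal e He). intros b Hb. change (Rabs (b - 0) < e) in Hb. rewrite Rminus_0_r in Hb.
      change (Derive (fun c => U (sqrt (r^2+c^2)) z) b = Kr U (sqrt (r^2+b^2)) z * (b / sqrt (r^2+b^2))).
      pose proof (sqrt_bound r b Hr). pose proof (sqrt_pos_r r b Hr).
      apply is_derive_unique. auto_derive.
      - replace (r * (r * 1) + b * (b * 1)) with (r^2+b^2) by ring.
        split; [apply Hex; apply Rabs_def1; lra|split; [|auto]].
        pose proof (pow2_ge_0 b); nra.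
      - replace (r * (r * 1) + b * (b * 1)) with (r^2+b^2) by ring. unfold Kr. field. lra. }
  apply is_derive_unique. auto_derive.
  - replace (r * (r * 1) + 0 * (0 * 1)) with (r^2) by ring. rewrite sqrt_pow2 by lra.
    repeat split; auto; nra.
  - replace (r * (r * 1) + 0 * (0 * 1)) with (r^2) by ring. rewrite sqrt_pow2 by lra.
    field. lra.
Qed.


Lemma near_dist u v r z del : Rabs (u - r) < del/2 -> Rabs (v - z) < del/2 -> dist3 u 0 v r 0 z < del.
Proof.
  intros H1 H2. eapply Rle_lt_trans; [apply dist3_le|]. rewrite Rminus_0_r, Rabs_R0. lra.
Qed.

Lemma schwarz_K (D : R -> R -> R -> Prop) U r z e : 0 < e ->
  C2_on D (lift U) ->
  (forall a b, Rabs (a - r) < e -> Rabs (b - z) < e -> D a 0 b /\ 0 < a) ->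
  Derive (fun a => Kz U a z) r = Derive (fun c => Kr U r c) z.
Proof.
  intros He HC HN.
  destruct (HN r z) as [HD0 Hr]; try (rewrite Rminus_diag, Rabs_R0; lra).
  apply (Schwarz U r z).
  - exists (mkposreal e He). intros u v Hu Hv. destruct (HN u v Hu Hv) as [HD Hu0].
    destruct (C2_K D U u v HC HD Hu0) as [A1 [A2 [A3 [A4 [A5 A6]]]]]. auto.
  - intros eps. destruct (HC r 0 z HD0) as [_ HC2].
    destruct (HC2 2%nat 0%nat ltac:(lia) ltac:(lia)) as [_ [_ [_ Hc]]].
    destruct (Hc eps (cond_pos eps)) as [del [Hdel Hd]].
    exists (mkposreal (Rmin e (del/2)) ltac:(apply Rmin_pos; lra)). simpl. intros u v Hu Hv.
    pose proof (Rmin_l e (del/2)); pose proof (Rmin_r e (del/2)).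
    destruct (HN u v ltac:(lra) ltac:(lra)) as [HD Hu0].
    specialize (Hd u 0 v HD (near_dist u v r z del ltac:(lra) ltac:(lra))).
    rewrite !pd02_lift in Hd by auto. exact Hd.
  - intros eps. destruct (HC r 0 z HD0) as [_ HC2].
    destruct (HC2 0%nat 2%nat ltac:(lia) ltac:(lia)) as [_ [_ [_ Hc]]].
    destruct (Hc eps (cond_pos eps)) as [del [Hdel Hd]].
    exists (mkposreal (Rmin e (del/2)) ltac:(apply Rmin_pos; lra)). simpl. intros u v Hu Hv.
    pose proof (Rmin_l e (del/2)); pose proof (Rmin_r e (del/2)).
    destruct (HN u v ltac:(lra) ltac:(lra)) as [HD Hu0].
    specialize (Hd u 0 v HD (near_dist u v r z del ltac:(lra) ltac:(lra))).
    rewrite !pd20_lift in Hd by auto. exact Hd.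
Qed.

Lemma dcos_r y r z : 0 < r -> is_derive (fun t => cosU y t z) r
  (- (z-y) * r / (sqrt (r^2+(z-y)^2))^3).
Proof.
  intros Hr. pose proof (sqrt_pos_r r (z-y) Hr) as Hs. unfold cosU. auto_derive.
  - try replace (r * (r * 1) + (z - y) * ((z - y) * 1)) with (r^2+(z-y)^2) by ring.
    try replace (r * (r * 1) + (z + - y) * ((z + - y) * 1)) with (r^2+(z-y)^2) by ring.
    repeat split; try exact I; try lra. pose proof (pow2_ge_0 (z-y)); nra.
  - try replace (r * (r * 1) + (z - y) * ((z - y) * 1)) with (r^2+(z-y)^2) by ring.
    try replace (r * (r * 1) + (z + - y) * ((z + - y) * 1)) with (r^2+(z-y)^2) by ring.
    set (SS := sqrt (r^2+(z-y)^2)) in *. field. lra.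
Qed.

Lemma dsin_r y r z : 0 < r -> is_derive (fun t => sinU y t z) r
  (1 / sqrt (r^2+(z-y)^2) - r^2 / (sqrt (r^2+(z-y)^2))^3).
Proof.
  intros Hr. pose proof (sqrt_pos_r r (z-y) Hr) as Hs. unfold sinU. auto_derive.
  - try replace (r * (r * 1) + (z - y) * ((z - y) * 1)) with (r^2+(z-y)^2) by ring.
    try replace (r * (r * 1) + (z + - y) * ((z + - y) * 1)) with (r^2+(z-y)^2) by ring.
    repeat split; try exact I; try lra. pose proof (pow2_ge_0 (z-y)); nra.
  - try replace (r * (r * 1) + (z - y) * ((z - y) * 1)) with (r^2+(z-y)^2) by ring.
    try replace (r * (r * 1) + (z + - y) * ((z + - y) * 1)) with (r^2+(z-y)^2) by ring.
    set (SS := sqrt (r^2+(z-y)^2)) in *. field. lra.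
Qed.

Lemma dcos_z y r z : 0 < r -> is_derive (fun s => cosU y r s) z
  (1 / sqrt (r^2+(z-y)^2) - (z-y)^2 / (sqrt (r^2+(z-y)^2))^3).
Proof.
  intros Hr. pose proof (sqrt_pos_r r (z-y) Hr) as Hs. unfold cosU. auto_derive.
  - try replace (r * (r * 1) + (z - y) * ((z - y) * 1)) with (r^2+(z-y)^2) by ring.
    try replace (r * (r * 1) + (z + - y) * ((z + - y) * 1)) with (r^2+(z-y)^2) by ring.
    repeat split; try exact I; try lra. pose proof (pow2_ge_0 (z-y)); nra.
  - try replace (r * (r * 1) + (z - y) * ((z - y) * 1)) with (r^2+(z-y)^2) by ring.
    try replace (r * (r * 1) + (z + - y) * ((z + - y) * 1)) with (r^2+(z-y)^2) by ring.
    set (SS := sqrt (r^2+(z-y)^2)) in *. field. lra.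
Qed.

Lemma dsin_z y r z : 0 < r -> is_derive (fun s => sinU y r s) z
  (- r * (z-y) / (sqrt (r^2+(z-y)^2))^3).
Proof.
  intros Hr. pose proof (sqrt_pos_r r (z-y) Hr) as Hs. unfold sinU. auto_derive.
  - try replace (r * (r * 1) + (z - y) * ((z - y) * 1)) with (r^2+(z-y)^2) by ring.
    try replace (r * (r * 1) + (z + - y) * ((z + - y) * 1)) with (r^2+(z-y)^2) by ring.
    repeat split; try exact I; try lra. pose proof (pow2_ge_0 (z-y)); nra.
  - try replace (r * (r * 1) + (z - y) * ((z - y) * 1)) with (r^2+(z-y)^2) by ring.
    try replace (r * (r * 1) + (z + - y) * ((z + - y) * 1)) with (r^2+(z-y)^2) by ring.
    set (SS := sqrt (r^2+(z-y)^2)) in *. field. lra.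
Qed.

Lemma alg r a R E Or Oz Ur Uz Mrz Mzz S : 0 < r -> 0 < R -> R^2 = r^2 + a^2 ->
  4*(E*((1 - a/R)*Or + - (r/R)*Oz))*((a/R)*Uz + (r/R)*-Ur + Uz) +
  4*S*(-a*r/R^3*Uz + (a/R)*Mrz + ((1/R - r^2/R^3)*-Ur + (r/R)*-(-(Ur/r) - Mzz)) + Mrz) -
  (4*(E*((1-a/R)*Oz + -(r/R)*-Or))*((a/R)*Ur + (r/R)*Uz + Ur) +
   4*S*((1/R - a^2/R^3)*Ur + (a/R)*Mrz + (-r*a/R^3*Uz + (r/R)*Mzz) + Mrz))
  = 8*(r/R)*E*(Or*-Ur - Oz*Uz).
Proof.
  intros Hr HR H2.
  apply Rminus_diag_uniq.
  transitivity ((4*E*(Oz*Ur - Or*Uz)/R^2 + 4*S*Ur/R^3) * (r^2 + a^2 - R^2)).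
  - field. split; lra.
  - rewrite H2. ring.
Qed.

Theorem mainTheorem7
  (rho0 z0 : R -> R) (muS muN : R)
  (U0 U0' Om0' : R -> R -> R) (y : R) (Zy S2 Zy' : R -> R -> R) :
  sphere_profile rho0 z0 muS muN ->
  let Sg := Sigma0 rho0 z0 muS muN in
  let D0 := exterior Sg in
  let KE := projK D0 in
  regular3 D0 Sg (lift U0) ->
  (forall a b c, D0 a b c -> lap3 (lift U0) a b c = 0) ->
  regular3 D0 Sg (lift U0') ->
  (forall a b c, D0 a b c -> lap3 (lift U0') a b c = 0) ->
  regular3 D0 Sg (lift Om0') ->
  (forall a b c, D0 a b c ->
     lap3 (lift Om0') a b c - 4 * gdot3 (lift Om0') (lift U0) a b c = 0) ->
  z0 muS < y < z0 muN ->
  solves_d KE Zy (fadd (fscale (cosU y) (dK0 U0)) (fscale (sinU y) (star (dK0 U0)))) ->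
  vanishes_at_infinity KE Zy ->
  solves_d KE S2
    (fscale (fun r z => exp (-2 * U0 r z - 2 * Zy r z))
       (fadd (fscale (fun r z => 1 - cosU y r z) (dK0 Om0'))
             (fscale (fun r z => - sinU y r z) (star (dK0 Om0'))))) ->
  vanishes_at_infinity KE S2 ->
  solves_d KE Zy' (fadd (fscale (cosU y) (dK0 U0')) (fscale (sinU y) (star (dK0 U0')))) ->
  vanishes_at_infinity KE Zy' ->
  let T2 := fscale (fun r z => - (4 / r) * S2 r z)
                   (star (dK0 (fun r z => Zy' r z + U0' r z))) in
  forall r z, KE r z -> 0 < r ->
    dK1 (fscale (fun r _ => r) (star T2)) r z =
    8 * sinU y r z * exp (-2 * U0 r z - 2 * Zy r z)
      * wedge (dK0 Om0') (star (dK0 U0')) r z.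

Proof.
  intros Hsp Sg D0 KE HregU HlapU HregU' HlapU' HregO HO Hy HZy HZyv HS2 HS2v HZy' HZy'v T2 r z HKE Hr.
  assert (HD : D0 r 0 z) by (apply KE_axis; auto).
  destruct (D0_open _ _ _ _ _ _ _ Hsp HD) as [del [Hdel Hop]].
  set (e0 := Rmin (del/2) (r/2)).
  assert (He0 : 0 < e0) by (apply Rmin_pos; lra).
  assert (HN : forall a b, Rabs (a - r) < e0 -> Rabs (b - z) < e0 -> D0 a 0 b /\ 0 < a).
  { intros a b Ha Hb. pose proof (Rmin_l (del/2) (r/2)); pose proof (Rmin_r (del/2) (r/2)).
    fold e0 in H, H0. split.
    - apply Hop. apply near_dist; lra.
    - apply Rabs_def2 in Ha. lra. }
  assert (HKEof : forall a b, D0 a 0 b -> 0 < a -> KE a b).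
  { intros a b H1 H2. exists a, 0. split; auto. rewrite sq0; auto. }
  assert (Hz0 : Rabs (z - z) < e0) by (rewrite Rminus_diag, Rabs_R0; lra).
  assert (Hr0 : Rabs (r - r) < e0) by (rewrite Rminus_diag, Rabs_R0; lra).
  destruct HregU' as [C2 _].
  destruct (C2_K D0 U0' r z C2 HD Hr) as [X1 [X2 [X3 [X4 [X5 X6]]]]].
  assert (Lap : Derive (fun a => Kr U0' a z) r + Kr U0' r z / r + Derive (fun c => Kz U0' r c) z = 0).
  { pose proof (HlapU' r 0 z HD) as H. unfold lap3 in H.
    rewrite pd00_lift, pd22_lift in H by auto.
    rewrite (lap_K U0' r z e0) in H; auto.
    intros a Ha. destruct (HN a z Ha Hz0) as [H1 H2]. apply (C2_K D0 U0' a z C2 H1 H2). }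
  assert (Sch : Derive (fun a => Kz U0' a z) r = Derive (fun c => Kr U0' r c) z).
  { apply (schwarz_K D0 U0' r z e0); auto. }
  unfold dK1, T2, wedge, fscale, star, dK0, fadd. cbn [fst snd].
  rewrite (Derive_ext_loc _ (fun t => 4 * S2 t z * (cosU y t z * Kz U0' t z + sinU y t z * - Kr U0' t z + Kz U0' t z))).
  2:{ exists (mkposreal e0 He0). intros t Ht. change (Rabs (t - r) < e0) in Ht.
      destruct (HN t z Ht Hz0) as [H1 H2].
      destruct (HZy' t z (HKEof t z H1 H2) H2) as [_ [E2 [_ E4]]].
      destruct (C2_K D0 U0' t z C2 H1 H2) as [_ [Y2 _]].
      cbn [fst snd fadd fscale star dK0] in E4.
      rewrite Derive_plus by auto. unfold Kz, Kr.
      transitivity (t * - (- (4 / t) * S2 t z * (Derive (fun t0 => Zy' t t0) z + Derive (fun t0 => U0' t t0) z))); [reflexivity|].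
      rewrite E4. field. lra. }
  rewrite (Derive_ext_loc (fun s => r * (- (4 / r) * S2 r s * - Derive (fun t0 => Zy' t0 s + U0' t0 s) r))
            (fun s => 4 * S2 r s * (cosU y r s * Kr U0' r s + sinU y r s * Kz U0' r s + Kr U0' r s))).
  2:{ exists (mkposreal e0 He0). intros s Hs. change (Rabs (s - z) < e0) in Hs.
      destruct (HN r s Hr0 Hs) as [H1 H2].
      destruct (HZy' r s (HKEof r s H1 H2) H2) as [E1 [_ [E3 _]]].
      destruct (C2_K D0 U0' r s C2 H1 H2) as [Y1 _].
      cbn [fst snd fadd fscale star dK0] in E3.
      rewrite Derive_plus by auto. unfold Kz, Kr.
      transitivity (r * (- (4 / r) * S2 r s * - (Derive (fun t0 => Zy' t0 s) r + Derive (fun t0 => U0' t0 s) r))); [reflexivity|].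
      rewrite E3. field. lra. }
  destruct (HS2 r z HKE Hr) as [S1 [S2e [S3 S4]]]. cbn [fst snd fadd fscale star dK0] in S3, S4.
  set (F1 := fun t => 4 * S2 t z * (cosU y t z * Kz U0' t z + sinU y t z * - Kr U0' t z + Kz U0' t z)).
  assert (DP : is_derive F1 r
    (4 * Derive (fun x => S2 x z) r * (cosU y r z * Kz U0' r z + sinU y r z * - Kr U0' r z + Kz U0' r z) +
     4 * S2 r z * (Derive (fun x => cosU y x z) r * Kz U0' r z + cosU y r z * Derive (fun x => Kz U0' x z) r +
       (Derive (fun x => sinU y x z) r * - Kr U0' r z + sinU y r z * - Derive (fun x => Kr U0' x z) r) +
       Derive (fun x => Kz U0' x z) r))).
  { unfold F1. auto_derive.
    - repeat split; auto.
      + eexists; apply dcos_r; auto.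
      + eexists; apply dsin_r; auto.
    - ring. }
  set (F2 := fun s => 4 * S2 r s * (cosU y r s * Kr U0' r s + sinU y r s * Kz U0' r s + Kr U0' r s)).
  assert (DQ : is_derive F2 z
    (4 * Derive (fun x => S2 r x) z * (cosU y r z * Kr U0' r z + sinU y r z * Kz U0' r z + Kr U0' r z) +
     4 * S2 r z * (Derive (fun x => cosU y r x) z * Kr U0' r z + cosU y r z * Derive (fun x => Kr U0' r x) z +
       (Derive (fun x => sinU y r x) z * Kz U0' r z + sinU y r z * Derive (fun x => Kz U0' r x) z) +
       Derive (fun x => Kr U0' r x) z))).
  { unfold F2. auto_derive.
    - repeat split; auto.
      + eexists; apply dcos_z; auto.
      + eexists; apply dsin_z; auto.
    - ring. }
  match goal with |- _ = ?RHS => change (Derive F1 r - Derive F2 z = RHS) end.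
  rewrite (is_derive_unique _ _ _ DP), (is_derive_unique _ _ _ DQ).
  assert (Dc1 : Derive (fun x : R => cosU y x z) r = - (z-y) * r / (sqrt (r^2+(z-y)^2))^3)
    by (apply is_derive_unique; apply dcos_r; auto).
  assert (Ds1 : Derive (fun x : R => sinU y x z) r = 1 / sqrt (r^2+(z-y)^2) - r^2 / (sqrt (r^2+(z-y)^2))^3)
    by (apply is_derive_unique; apply dsin_r; auto).
  assert (Dc2 : Derive (fun x : R => cosU y r x) z = 1 / sqrt (r^2+(z-y)^2) - (z-y)^2 / (sqrt (r^2+(z-y)^2))^3)
    by (apply is_derive_unique; apply dcos_z; auto).
  assert (Ds2 : Derive (fun x : R => sinU y r x) z = - r * (z-y) / (sqrt (r^2+(z-y)^2))^3)
    by (apply is_derive_unique; apply dsin_z; auto).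
  rewrite Dc1, Ds1, Dc2, Ds2.
  rewrite S3, S4, Sch.
  replace (Derive (fun x => Kr U0' x z) r) with (- (Kr U0' r z / r) - Derive (fun c => Kz U0' r c) z) by lra.
  change (Derive (fun t => U0' t z) r) with (Kr U0' r z).
  change (Derive (fun t => U0' r t) z) with (Kz U0' r z).
  unfold cosU, sinU.
  pose proof (sqrt_pos_r r (z-y) Hr) as HRp.
  assert (HR2 : (sqrt (r^2+(z-y)^2))^2 = r^2 + (z-y)^2) by (rewrite pow2_sqrt; [reflexivity| pose proof (pow2_ge_0 (z-y)); nra]).
  set (RR := sqrt (r^2+(z-y)^2)) in *.
  apply (alg r (z-y) RR); auto.
Qed.
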